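(* Let $n\ge 2$ and assume a weighing matrix of order $n$ and weight $n-1$ exists. Let $q$ be a prime power with $q\ge n$. Then there exists a set of $q-1$ mutually unbiased weighing matrices of order $nq$ and weight $(n-1)^2$.
   Context: A weighing matrix of order $n$ and weight $k$ is an $n\times n$ matrix $W$ with entries in $\{1,-1,0\}$ such that $WW^T=kI_n$. Two weighing matrices $W_1,W_2$ of order $N$ and weight $K$ are unbiased if $\frac{1}{\sqrt{K}}W_1W_2^T$ is a weighing matrix of order $N$ and weight $K$; a set is mutually unbiased if any two distinct members are unbiased. *)

(* Defs.v *)
From mathcomp Require Import all_boot all_order all_algebra all_field.
Set Implicit Arguments. Unset Strict Implicit. Unset Printing Implicit Defensive.
Import Order.TTheory GRing.Theory Num.Theory.
Local Open Scope ring_scope.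

Definition is_weighing (R : pzRingType) (n k : nat) (W : 'M[R]_n) : Prop :=
  (forall i j, W i j \in [:: 0; 1; -1]) /\ W *m W^T = (k%:R)%:M.

Definition toC (N : nat) (W : 'M[int]_N) : 'M[algC]_N := map_mx intr W.

Definition unbiased (N K : nat) (W1 W2 : 'M[int]_N) : Prop :=
  is_weighing K ((sqrtC (K%:R))^-1 *: (toC W1 *m (toC W2)^T)).

Definition prime_power (q : nat) : Prop :=
  exists p k : nat, prime p /\ (0 < k)%N /\ q = (p ^ k)%N.

(* Main.v *)
Require Import Defs.
From mathcomp Require Import all_boot all_order all_algebra all_field ring.
Set Implicit Arguments. Unset Strict Implicit. Unset Printing Implicit Defensive.
Import Order.TTheory GRing.Theory Num.Theory.
Local Open Scope ring_scope.

Definition S3 : seq int := [:: 0; 1; -1].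

Lemma S3M (x y : int) : x \in S3 -> y \in S3 -> x * y \in S3.
Proof. by rewrite !inE => /or3P[]/eqP-> /or3P[]/eqP->. Qed.

Lemma sum_unique (I : finType) (P : pred I) (g : I -> int) c0 :
  P c0 -> (forall d, P d -> d = c0) -> \sum_c (P c)%:R * g c = g c0.
Proof.
move=> Pc0 Hu; rewrite (bigD1 c0) //= Pc0 mul1r big1 ?addr0 // => d dc0.
case Pd: (P d); last by rewrite mul0r.
by move: dc0; rewrite (Hu d Pd) eqxx.
Qed.

Lemma sum_atmost1 (I : finType) (P : pred I) (g : I -> int) :
  (forall c d, P c -> P d -> c = d) -> (forall c, g c \in S3) ->
  \sum_c (P c)%:R * g c \in S3.
Proof.
move=> Hu Hg; case: (pickP P) => [c0 Pc0|none].
  by rewrite (@sum_unique _ _ _ _ Pc0) // => d Pd; apply: Hu.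
by rewrite big1 // => c _; rewrite none mul0r.
Qed.

Lemma sum_eq1 (F : finType) (p p' : F) (z : int) :
  \sum_(y : F) ((y == p)%:R * ((y == p')%:R * z)) = (p == p')%:R * z.
Proof.
rewrite (bigD1 p) //= eqxx mul1r big1 ?addr0 // => y /negbTE ->.
by rewrite mul0r.
Qed.

Lemma ord_bij (T : finType) N : #|T| = N -> {h : 'I_N -> T | bijective h}.
Proof.
move=> HN; exists (fun i => enum_val (cast_ord (esym HN) i)).
exists (fun x => cast_ord HN (enum_rank x)) => x.
  by rewrite enum_valK cast_ordKV.
by rewrite cast_ordK enum_rankK.
Qed.

Lemma gram_comm (R : fieldType) m (B : 'M[R]_m) c :
  c != 0 -> B *m B^T = c%:M -> B^T *m B = c%:M.
Proof.
move=> c0 H.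
have H1: (c^-1 *: B) *m B^T = 1%:M by rewrite -scalemxAl H scale_scalar_mx mulVf.
have := mulmx1C H1; rewrite -scalemxAr => H2.
by rewrite -[B^T *m B](scalerKV c0) H2 scale_scalar_mx mulr1.
Qed.

Section Constr.
Variables (F : finFieldType) (n : nat) (W : 'M[int]_n) (k : nat).
Hypothesis hWW : W *m W^T = (k%:R)%:M.
Hypothesis hWent : forall i j, W i j \in S3.
Variable alpha : 'I_n -> F.
Hypothesis alpha_inj : injective alpha.
Variables (N : nat) (e : 'I_N -> (F * 'I_n)%type).
Hypothesis e_bij : bijective e.

Definition fM (beta : F) (u v : F * 'I_n) : int :=
  \sum_(c < n) ((v.1 == u.1 + beta * alpha c)%:R * W u.2 c) * W c v.2.

Definition Mx beta : 'M[int]_N := \matrix_(r, s) fM beta (e r) (e s).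

Lemma L1 (g h : 'I_n -> int) :
  \sum_b ((\sum_c g c * W c b) * (\sum_d h d * W d b)) = k%:R * \sum_c g c * h c.
Proof.
transitivity (\sum_c \sum_d g c * h d * (W *m W^T) c d).
  under eq_bigr do rewrite mulr_suml.
  rewrite exchange_big /=; apply: eq_bigr => c _.
  under eq_bigr do rewrite mulr_sumr.
  rewrite exchange_big /=; apply: eq_bigr => d _.
  rewrite mxE mulr_sumr; apply: eq_bigr => b _; rewrite mxE.
  by rewrite mulrACA.
rewrite mulr_sumr; apply: eq_bigr => c _.
rewrite hWW (bigD1 c) //= big1 ?addr0 => [|d dc]; last first.
  by rewrite mxE eq_sym (negbTE dc) mulr0n mulr0.
by rewrite mxE eqxx mulr1n mulrC.
Qed.

Lemma prodE beta gamma r s :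
  (Mx beta *m (Mx gamma)^T) r s =
  k%:R * \sum_(c < n) (((e r).1 + beta * alpha c == (e s).1 + gamma * alpha c)%:R
                        * (W (e r).2 c * W (e s).2 c)).
Proof.
rewrite mxE.
under eq_bigr do rewrite !mxE.
rewrite -(reindex e (onW_bij _ e_bij) (P := xpredT)
   (F := fun t => fM beta (e r) t * fM gamma (e s) t)) /=.
rewrite -(pair_big xpredT xpredT (fun y b => fM beta (e r) (y, b) * fM gamma (e s) (y, b))) /=.
transitivity (\sum_(y : F) k%:R * \sum_c
   ((y == (e r).1 + beta * alpha c)%:R * W (e r).2 c) *
   ((y == (e s).1 + gamma * alpha c)%:R * W (e s).2 c)).
  by apply: eq_bigr => y _; rewrite /fM /= L1.
rewrite -mulr_sumr; congr (_ * _); rewrite exchange_big /=.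
apply: eq_bigr => c _.
rewrite -sum_eq1; apply: eq_bigr => y _.
by rewrite -!mulrA (mulrCA (W _ _)).
Qed.

Lemma Mx_self beta : Mx beta *m (Mx beta)^T = (((k ^ 2)%N)%:R)%:M.
Proof.
apply/matrixP => r s; rewrite prodE [RHS]mxE -(inj_eq (bij_inj e_bij)).
case: (e r) (e s) => [x a] [x' a'] /=; rewrite xpair_eqE.
under eq_bigr do rewrite (inj_eq (addIr _)).
rewrite -mulr_sumr.
have -> : \sum_(i < n) W a i * W a' i = (W *m W^T) a a'.
  by rewrite mxE; apply: eq_bigr => i _; rewrite mxE.
rewrite hWW mxE natrX.
by case: (x == x'); case: (a == a'); rewrite /= ?mulr1n ?mulr0n ?mul1r ?mul0r ?mulr0 ?expr2.
Qed.

Lemma Mx_ent beta : beta != 0 -> forall r s, Mx beta r s \in S3.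
Proof.
move=> b0 r s; rewrite mxE /fM.
under eq_bigr do rewrite -mulrA.
apply: sum_atmost1 => [c d /eqP Hc /eqP Hd|c]; last exact: S3M.
apply: alpha_inj; apply: (GRing.mulfI b0); apply: (addrI (e r).1).
by rewrite -Hc -Hd.
Qed.

Lemma Mx_cross beta gamma : beta != gamma ->
  exists E : 'M[int]_N, Mx beta *m (Mx gamma)^T = k%:R *: E /\
    forall r s, E r s \in S3.
Proof.
move=> bg.
exists (\matrix_(r, s) \sum_(c < n) (((e r).1 + beta * alpha c == (e s).1 + gamma * alpha c)%:R
                        * (W (e r).2 c * W (e s).2 c))).
split.
  by apply/matrixP => r s; rewrite prodE !mxE.
move=> r s; rewrite mxE.
apply: sum_atmost1 => [c d /eqP Hc /eqP Hd|c]; last exact: S3M.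
have bg0 : beta - gamma != 0 by rewrite subr_eq0.
apply: alpha_inj; apply: (GRing.mulfI bg0).
have h1 : (e s).1 = (e r).1 + beta * alpha c - gamma * alpha c by rewrite Hc addrK.
have h2 : (e s).1 = (e r).1 + beta * alpha d - gamma * alpha d by rewrite Hd addrK.
have : (e r).1 + beta * alpha c - gamma * alpha c = (e r).1 + beta * alpha d - gamma * alpha d.
  by rewrite -h1 -h2.
move=> H.
have -> : (beta - gamma) * alpha c = (e r).1 + beta * alpha c - gamma * alpha c - (e r).1 by ring.
rewrite H; ring.
Qed.
End Constr.

Lemma map_sq N (A : 'M[int]_N) (c : int) : A *m A^T = c%:M ->
  map_mx (intr : int -> algC) A *m (map_mx intr A)^T = (intr c)%:M.
Proof. by move=> H; rewrite map_trmx -map_mxM H map_scalar_mx. Qed.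

Lemma unb_gen N (A B E : 'M[int]_N) (k : nat) : (0 < k)%N ->
  A *m A^T = (((k ^ 2)%N)%:R)%:M -> B *m B^T = (((k ^ 2)%N)%:R)%:M ->
  A *m B^T = k%:R *: E -> (forall r s, E r s \in S3) -> unbiased (k ^ 2) A B.
Proof.
move=> k0 hA hB hAB hE; rewrite /unbiased /toC.
have kC : (k%:R : algC) != 0 by rewrite pnatr_eq0 -lt0n.
have sK : sqrtC ((k ^ 2)%N%:R : algC) = k%:R by rewrite natrX sqrCK // ler0n.
have hG : map_mx intr A *m (map_mx (intr : int -> algC) B)^T = k%:R *: map_mx intr E.
  rewrite map_trmx -map_mxM hAB; apply/matrixP => i j; rewrite !mxE.
  by rewrite rmorphM /= rmorph_nat.
have hA' := map_sq hA; have hB' := map_sq hB.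
rewrite rmorph_nat in hA' hB'.
rewrite sK hG scalerK //; split.
  move=> i j; rewrite mxE; move: (hE i j); rewrite !inE => /or3P[]/eqP->.
  - by rewrite rmorph0 eqxx.
  - by rewrite rmorph1 eqxx orbT.
  - by rewrite rmorphN rmorph1 eqxx !orbT.
have K0 : ((k ^ 2)%N%:R : algC) != 0 by rewrite natrX expf_neq0.
have hBt := gram_comm K0 hB'.
rewrite -(scalerK kC (map_mx intr E)) -hG.
rewrite linearZ /= -scalemxAl -scalemxAr scalerA trmx_mul trmxK.
rewrite mulmxA -(mulmxA _ _ (map_mx intr B)) hBt.
rewrite mul_mx_scalar -scalemxAl hA' scale_scalar_mx.
apply/matrixP => i j; rewrite !mxE; case: (i == j); rewrite ?mulr1n ?mulr0n ?mulr0 // natrX; field; exact: kC.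
Qed.

Theorem corollary3p4 (n q : nat) :
  (2 <= n)%N ->
  (exists W : 'M[int]_n, is_weighing n.-1 W) ->
  prime_power q -> (n <= q)%N ->
  exists F : 'I_q.-1 -> 'M[int]_(n * q),
    injective F /\
    (forall i, is_weighing (n.-1 ^ 2) (F i)) /\
    (forall i j, i != j -> unbiased (n.-1 ^ 2) (F i) (F j)).
Proof.
move=> n2 [W [Went WW]] [p [m [pp [m0 qE]]]] nq.
have [Fq _ cardF] := pPrimePowerField pp m0.
rewrite -qE in cardF.
set k := n.-1.
have k0 : (0 < k)%N by rewrite /k -subn1 subn_gt0.
have kZ : (k%:R : int) != 0 by rewrite pnatr_eq0 -lt0n.
have n0 : (0 < n)%N by apply: ltnW.
pose a0 : 'I_n := Ordinal n0.
have [c0 Wc0] : exists c0, W a0 c0 != 0.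
  case: (pickP (fun c => W a0 c != 0)) => [c Hc|none]; first by exists c.
  have : (W *m W^T) a0 a0 = k%:R by rewrite WW mxE eqxx mulr1n.
  rewrite mxE big1 => [/eqP|c _]; first by rewrite eq_sym (negbTE kZ).
  by move/negbFE/eqP: (none c) => ->; rewrite mul0r.
have [h hb] := ord_bij cardF.
pose alpha (c : 'I_n) : Fq := h (widen_ord nq c) - h (widen_ord nq c0) + 1.
have alpha_inj : injective alpha.
  move=> c d /addIr /addIr /(bij_inj hb) /(congr1 val) /= cd.
  exact: val_inj.
have alpha0 : alpha c0 != 0 by rewrite /alpha subrr add0r oner_neq0.
have HT : #|{: Fq * 'I_n}| = (n * q)%N by rewrite card_prod card_ord cardF mulnC.
have [e eb] := ord_bij HT.
have [hinv hK hKV] := hb.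
pose i0 := hinv 0.
pose beta (i : 'I_q.-1) : Fq := h (lift i0 i).
have beta0 i : beta i != 0.
  apply/eqP => /(congr1 hinv); rewrite hK => H.
  by move: (neq_lift i0 i); rewrite H /i0 eqxx.
have beta_inj : injective beta.
  by move=> i j /(bij_inj hb) /lift_inj.
have hWent : forall i j, W i j \in S3 by [].
exists (fun i => Mx W alpha e (beta i)).
split; last split.
- move=> i j Hij; case: (eqVneq i j) => // ne; exfalso.
  have bne : beta i != beta j by apply: contra ne => /eqP/beta_inj ->.
  have [einv eK eKV] := eb.
  pose r := einv (0, a0).
  pose s := einv ((beta i - beta j) * alpha c0, a0).
  have := prodE WW alpha eb (beta i) (beta j) r s.
  rewrite Hij (Mx_self WW alpha eb) /r /s !eKV /=.
  rewrite (@sum_unique _ _ (fun c => W a0 c * W a0 c) c0); last first.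
  + move=> d /eqP Hd; apply: alpha_inj.
    have bg0 : beta i - beta j != 0 by rewrite subr_eq0.
    apply: (GRing.mulfI bg0).
    have -> : (beta i - beta j) * alpha d = 0 + beta i * alpha d - beta j * alpha d by ring.
    by rewrite Hd; ring.
  + by apply/eqP; ring.
  rewrite mxE.
  have -> : (r == s) = false.
    apply/negbTE; apply/eqP => /(congr1 e); rewrite !eKV => [[]] /eqP.
    by rewrite eq_sym mulf_eq0 subr_eq0 (negbTE bne) (negbTE alpha0).
  rewrite mulr0n.
  have : W a0 c0 * W a0 c0 = 1.
    by move: (hWent a0 c0) Wc0; rewrite !inE => /or3P[]/eqP->.
  by move=> ->; rewrite mulr1 => /esym/eqP; rewrite (negbTE kZ).
- move=> i; split; last first. by rewrite (Mx_self WW alpha eb).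
  exact: (Mx_ent hWent alpha_inj e (beta0 i)).
- move=> i j ij.
  have bne : beta i != beta j by apply: contra ij => /eqP/beta_inj ->.
  have [E [hE1 hE2]] := Mx_cross WW hWent alpha_inj eb bne.
  exact: (unb_gen k0 (Mx_self WW alpha eb _) (Mx_self WW alpha eb _) hE1 hE2).
Qed.
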